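(* For an integer $p\ge1$ let $F_p(s)=-\sum_{j=1}^\infty\ln(1-e^{j^ps})$ for $s<0$. Then for every pair of integers $p\ge1$ and $m\ge0$, $$F_p^{(m)}(-s)\sim\frac1p\,\zeta(1+1/p)\,\Gamma(m+1/p)\,\frac{1}{s^{m+1/p}},\quad\text{as } s\downarrow0.$$
   Context: $F_p$ is the fulcrum $s\mapsto\ln G_p(e^s)$ of $G_p(z)=\prod_{j\ge1}(1-z^{j^p})^{-1}$, the generating function of partitions into $p$-th powers. $F_p^{(m)}$ denotes the $m$-th derivative ($F_p^{(0)}=F_p$). $\alpha(s)\sim\beta(s)$ means $\alpha(s)/\beta(s)\to1$. $\zeta$ is the Riemann zeta function and $\Gamma$ the Gamma function. *)

(* Defs.v *)
From Stdlib Require Import Reals.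
From Coquelicot Require Import Coquelicot.
Open Scope R_scope.

Definition Fp (p : nat) (s : R) : R :=
  - Series (fun j : nat => ln (1 - exp (INR (S j) ^ p * s))).

Definition zeta (x : R) : R :=
  Series (fun n : nat => / Rpower (INR (S n)) x).

Definition Gamma (x : R) : R :=
  RInt_gen (fun t => Rpower t (x - 1) * exp (- t))
           (at_right 0) (Rbar_locally p_infty).

(* Main.v *)
Require Import Defs.
From Stdlib Require Import Reals Lra Lia.
From Coquelicot Require Import Coquelicot.
Open Scope R_scope.


Lemma sum_n_nonneg (a : nat -> R) N : (forall n, 0 <= a n) -> 0 <= sum_n a N.
Proof.
  intros H; induction N. rewrite sum_O; auto.
  rewrite sum_Sn; unfold plus; simpl. specialize (H (S N)); lra.
Qed.

Lemma sum_n_le_mono (a b : nat -> R) N : (forall n, a n <= b n) -> sum_n a N <= sum_n b N.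
Proof.
  intros H; induction N. rewrite !sum_O; auto.
  rewrite !sum_Sn; unfold plus; simpl. specialize (H (S N)); lra.
Qed.

Lemma sum_n_mono_N (a : nat -> R) N M : (forall n, 0 <= a n) -> (N <= M)%nat -> sum_n a N <= sum_n a M.
Proof.
  intros H HNM; induction HNM. lra.
  rewrite sum_Sn; unfold plus; simpl. specialize (H (S m)); lra.
Qed.

Lemma partial_le_series (a : nat -> R) N : (forall n, 0 <= a n) -> ex_series a -> sum_n a N <= Series a.
Proof.
  intros H Hex. apply (is_lim_seq_incr_compare (sum_n a)).
  apply (Series_correct _ Hex).
  intros n; rewrite sum_Sn; unfold plus; simpl. specialize (H (S n)); lra.
Qed.

Lemma term_le_series (a : nat -> R) N : (forall n, 0 <= a n) -> ex_series a -> a N <= Series a.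
Proof.
  intros H Hex. eapply Rle_trans; [|apply (partial_le_series a N H Hex)].
  destruct N. rewrite sum_O; lra. rewrite sum_Sn; unfold plus; simpl.
  pose proof (sum_n_nonneg a N H); lra.
Qed.

Lemma series_nonneg (a : nat -> R) : (forall n, 0 <= a n) -> ex_series a -> 0 <= Series a.
Proof.
  intros H Hex. eapply Rle_trans; [|apply (term_le_series a 0 H Hex)]. auto.
Qed.

Lemma nonneg_bounded (a : nat -> R) B : (forall n, 0 <= a n) -> (forall N, sum_n a N <= B) ->
  ex_series a /\ Series a <= B.
Proof.
  intros H HB.
  assert (E : ex_finite_lim_seq (sum_n a)).
  { apply (ex_finite_lim_seq_incr _ B); auto.
    intros n; rewrite sum_Sn; unfold plus; simpl. specialize (H (S n)); lra. }
  pose proof (Lim_seq_correct' _ E) as L.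
  assert (Hs : ex_series a) by (exists (real (Lim_seq (sum_n a))); exact L).
  split; auto.
  pose proof (Series_correct _ Hs) as L2.
  pose proof (is_lim_seq_le (sum_n a) (fun _ => B) (Series a) B HB L2 (is_lim_seq_const B)).
  simpl in H0; lra.
Qed.

Lemma ex_series_le_R (a b : nat -> R) : (forall n, 0 <= a n <= b n) -> ex_series b -> ex_series a.
Proof.
  intros H Hb. apply (ex_series_le a b); auto.
  intros n. change (norm (a n)) with (Rabs (a n)). rewrite Rabs_pos_eq; apply H.
Qed.

Lemma sum_n_series (u : nat -> nat -> R) K : (forall k, ex_series (fun j => u j k)) ->
  ex_series (fun j => sum_n (u j) K) /\
  sum_n (fun k => Series (fun j => u j k)) K = Series (fun j => sum_n (u j) K).
Proof.
  intros H. induction K.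
  - rewrite sum_O. split.
    + eapply ex_series_ext; [|apply (H 0%nat)]. intros; rewrite sum_O; auto.
    + apply Series_ext; intros; rewrite sum_O; auto.
  - destruct IHK as [E1 E2]. split.
    + eapply ex_series_ext; [|apply (ex_series_plus _ _ E1 (H (S K)))].
      intros n; rewrite sum_Sn; auto.
    + rewrite sum_Sn, E2. unfold plus; simpl.
      rewrite <- Series_plus; auto. apply Series_ext; intros n; rewrite sum_Sn; auto.
Qed.

Lemma fubini_half (u : nat -> nat -> R) : (forall j k, 0 <= u j k) ->
  (forall k, ex_series (fun j => u j k)) -> (forall j, ex_series (u j)) ->
  ex_series (fun j => Series (u j)) ->
  ex_series (fun k => Series (fun j => u j k)) /\
  Series (fun k => Series (fun j => u j k)) <= Series (fun j => Series (u j)).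
Proof.
  intros H0 Hk Hj Hs. apply nonneg_bounded.
  - intros k; apply series_nonneg; auto.
  - intros K. destruct (sum_n_series u K Hk) as [_ ->].
    apply Series_le; auto. intros n; split. apply sum_n_nonneg; auto.
    apply partial_le_series; auto.
Qed.

Lemma fubini (u : nat -> nat -> R) : (forall j k, 0 <= u j k) ->
  (forall j, ex_series (u j)) -> ex_series (fun j => Series (u j)) ->
  ex_series (fun k => Series (fun j => u j k)) /\
  Series (fun k => Series (fun j => u j k)) = Series (fun j => Series (u j)).
Proof.
  intros H0 Hj Hs.
  assert (Hk : forall k, ex_series (fun j => u j k)).
  { intros k. apply (ex_series_le_R _ (fun j => Series (u j))); auto.
    intros j; split; auto. apply term_le_series; auto. }
  destruct (fubini_half u H0 Hk Hj Hs) as [E1 L1].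
  destruct (fubini_half (fun k j => u j k) (fun k j => H0 j k) Hj Hk E1) as [_ L2].
  simpl in L2. change (Series (fun j => Series (fun k => u j k))) with (Series (fun j => Series (u j))) in L2.
  split; auto. lra.
Qed.

Lemma ex_series_minus_R (a b : nat -> R) : ex_series a -> ex_series b -> ex_series (fun n => a n - b n).
Proof.
  intros Ha Hb. eapply ex_series_ext; [|apply (ex_series_minus a b Ha Hb)].
  intros n; reflexivity.
Qed.

Lemma ex_series_plus_R (a b : nat -> R) : ex_series a -> ex_series b -> ex_series (fun n => a n + b n).
Proof.
  intros Ha Hb. eapply ex_series_ext; [|apply (ex_series_plus a b Ha Hb)].
  intros n; reflexivity.
Qed.

Lemma ex_series_scal_R (c : R) (a : nat -> R) : ex_series a -> ex_series (fun n => c * a n).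
Proof.
  intros Ha. eapply ex_series_ext; [|apply (ex_series_scal_l c a Ha)].
  intros n; reflexivity.
Qed.


Lemma taylor_bound (f f1 f2 : R -> R) t d M :
  (forall x, Rabs (x - t) <= d -> is_derive f x (f1 x) /\ is_derive f1 x (f2 x) /\ Rabs (f2 x) <= M) ->
  forall h, Rabs h <= d -> Rabs (f (t + h) - f t - h * f1 t) <= h * h * M.
Proof.
  intros H h Hh.
  set (g := fun x => f x - x * f1 t).
  assert (Hg : forall c, Rabs (c - t) <= d -> is_derive g c (f1 c - f1 t)).
  { intros c Hc. unfold g. destruct (H c Hc) as [D1 _].
    replace (f1 c - f1 t) with (f1 c - 1 * f1 t) by ring.
    apply (is_derive_minus f (fun x => x * f1 t)); auto.
    auto_derive; auto; ring. }
  destruct (MVT_cor4 g (fun c => f1 c - f1 t) t d Hg (t + h)) as [c [Hc1 Hc2]].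
  { replace (t + h - t) with h by ring; auto. }
  assert (Hct : Rabs (c - t) <= d). { replace (t+h-t) with h in Hc2 by ring; lra. }
  assert (Hf1 : forall x, Rabs (x - t) <= d -> is_derive f1 x (f2 x)) by (intros x Hx; apply H; auto).
  destruct (MVT_cor4 f1 f2 t d Hf1 c Hct) as [e [He1 He2]].
  assert (Het : Rabs (e - t) <= d) by lra.
  destruct (H e Het) as [_ [_ Hb]].
  unfold g in Hc1. replace (t + h - t) with h in * by ring.
  replace (f (t + h) - f t - h * f1 t) with ((f1 c - f1 t) * h) by lra.
  rewrite He1. rewrite !Rabs_mult.
  assert (0 <= M) by (eapply Rle_trans; [apply Rabs_pos|exact Hb]).
  assert (Rabs (c - t) <= Rabs h) by lra.
  assert (Hhh : Rabs h * Rabs h = h * h) by (rewrite <- Rabs_mult; apply Rabs_pos_eq; nra).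
  replace (h * h * M) with (M * Rabs h * Rabs h) by (rewrite Rmult_assoc, Hhh; ring).
  apply Rmult_le_compat_r. apply Rabs_pos.
  apply Rmult_le_compat; auto; apply Rabs_pos.
Qed.

Lemma tbt (f f1 f2 : nat -> R -> R) (M : nat -> R) t d : 0 < d ->
  (forall i x, Rabs (x - t) <= d -> is_derive (f i) x (f1 i x) /\ is_derive (f1 i) x (f2 i x) /\ Rabs (f2 i x) <= M i) ->
  ex_series M -> (forall x, Rabs (x - t) <= d -> ex_series (fun i => f i x)) ->
  ex_series (fun i => f1 i t) ->
  is_derive (fun x => Series (fun i => f i x)) t (Series (fun i => f1 i t)).
Proof.
  intros Hd H HM Hf Hf1.
  assert (M0 : forall i, 0 <= M i).
  { intros i. destruct (H i t) as [_ [_ Hb]]. rewrite Rminus_eq_0, Rabs_R0; lra.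
    eapply Rle_trans; [apply Rabs_pos|exact Hb]. }
  set (SM := Series M).
  assert (SM0 : 0 <= SM) by (apply series_nonneg; auto).
  apply is_derive_Reals. intros eps Heps.
  assert (Hp : 0 < Rmin d (eps / (SM + 1))).
  { apply Rmin_pos; auto. apply Rdiv_lt_0_compat; lra. }
  exists (mkposreal _ Hp). intros h Hh0 Hh. simpl in Hh.
  assert (Hhd : Rabs h <= d) by (pose proof (Rmin_l d (eps / (SM + 1))); lra).
  assert (Hhe : Rabs h < eps / (SM + 1)) by (pose proof (Rmin_r d (eps / (SM + 1))); lra).
  assert (Ex1 : ex_series (fun i => f i (t + h))) by (apply Hf; replace (t+h-t) with h by ring; auto).
  assert (Ex0 : ex_series (fun i => f i t)) by (apply Hf; rewrite Rminus_eq_0, Rabs_R0; lra).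
  set (e := fun i => f i (t + h) - f i t - h * f1 i t).
  assert (Hb : forall i, Rabs (e i) <= h * h * M i).
  { intros i. apply (taylor_bound (f i) (f1 i) (f2 i) t d (M i)); auto. }
  assert (Exe : ex_series (fun i => Rabs (e i))).
  { apply (ex_series_le_R _ (fun i => h * h * M i)).
    intros i; split; [apply Rabs_pos|apply Hb].
    apply (ex_series_scal_R (h*h) M HM). }
  assert (Eq : Series e = Series (fun i => f i (t + h)) - Series (fun i => f i t) - h * Series (fun i => f1 i t)).
  { rewrite <- Series_scal_l. unfold e. rewrite Series_minus.
    rewrite Series_minus; auto. apply ex_series_minus_R; auto.
    apply (ex_series_scal_R h _ Hf1). }
  assert (Hse : Rabs (Series e) <= h * h * SM).
  { eapply Rle_trans. apply Series_Rabs; auto. unfold SM. rewrite <- Series_scal_l.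
    apply Series_le. intros i; split; [apply Rabs_pos| apply Hb].
    apply (ex_series_scal_R (h*h) M HM). }
  replace ((Series (fun i => f i (t + h)) - Series (fun i => f i t)) / h - Series (fun i => f1 i t))
    with (Series e / h) by (rewrite Eq; field; auto).
  unfold Rdiv. rewrite Rabs_mult, Rabs_inv.
  assert (0 < Rabs h) by (apply Rabs_pos_lt; auto).
  apply (Rmult_le_compat_r (/ Rabs h)) in Hse; [|left; apply Rinv_0_lt_compat; auto].
  eapply Rle_lt_trans; [exact Hse|].
  replace (h * h * SM * / Rabs h) with (Rabs h * SM).
  2: { rewrite <- (Rabs_pos_eq (h*h)) by nra. rewrite Rabs_mult. field. lra. }
  apply (Rmult_lt_compat_r (SM+1)) in Hhe; [|lra].
  replace (eps / (SM + 1) * (SM + 1)) with eps in Hhe by (field; lra).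
  pose proof (Rabs_pos h). nra.
Qed.


Lemma exp_mono x y : x <= y -> exp x <= exp y.
Proof. intros [H|H]. left; apply exp_increasing; auto. subst; lra. Qed.

Lemma exp_nat n x : exp (INR n * x) = exp x ^ n.
Proof.
  induction n. simpl. rewrite Rmult_0_l, exp_0; auto.
  rewrite S_INR, Rmult_plus_distr_r, Rmult_1_l, exp_plus, IHn. simpl; ring.
Qed.

Lemma pow_exp_bound n x l : x < 0 -> 0 <= l ->
  l ^ n * exp (l * x) <= (2 * INR n / (- x)) ^ n * exp (l * x / 2).
Proof.
  intros Hx Hl. destruct n.
  - simpl. rewrite !Rmult_1_l. apply exp_mono. nra.
  - set (y := - l * x / 2). assert (Hy : 0 <= y) by (unfold y; nra).
    assert (HnR : 0 < INR (S n)) by (apply lt_0_INR; lia).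
    assert (E1 : l = (2 * INR (S n) / - x) * (y / INR (S n))) by (unfold y; field; lra).
    assert (E2 : exp (l * x) = exp (l * x / 2) * exp (- y)) by (rewrite <- exp_plus; f_equal; unfold y; field).
    rewrite E2, E1 at 1. rewrite Rpow_mult_distr.
    assert (Hb : (y / INR (S n)) ^ S n * exp (- y) <= 1).
    { assert (exp y = exp (y / INR (S n)) ^ S n).
      { rewrite <- exp_nat. f_equal. field. lra. }
      assert ((y / INR (S n)) ^ S n <= exp y).
      { rewrite H. apply pow_incr. split. apply Rmult_le_pos; auto. left; apply Rinv_0_lt_compat; auto.
        pose proof (exp_ineq1_le (y / INR (S n))); lra. }
      assert (exp y * exp (- y) = 1) by (rewrite <- exp_plus; replace (y + - y) with 0 by ring; apply exp_0).
      pose proof (exp_pos (-y)). nra. }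
    assert (0 <= (2 * INR (S n) / - x) ^ S n).
    { apply pow_le. apply Rmult_le_pos; [lra|left; apply Rinv_0_lt_compat; lra]. }
    pose proof (exp_pos (l * x / 2)).
    replace ((2 * INR (S n) / - x) ^ S n * (y / INR (S n)) ^ S n * (exp (l * x / 2) * exp (- y)))
      with ((2 * INR (S n) / - x) ^ S n * exp (l * x / 2) * ((y / INR (S n)) ^ S n * exp (- y))) by ring.
    rewrite <- (Rmult_1_r ((2 * INR (S n) / - x) ^ S n * exp (l * x / 2))) at 2.
    apply Rmult_le_compat_l; nra.
Qed.

Lemma ex_series_geomS c : c < 0 -> ex_series (fun k => exp (INR (S k) * c)).
Proof.
  intros Hc. apply (ex_series_ext (fun k => exp c * exp c ^ k)).
  { intros k. rewrite exp_nat. simpl. reflexivity. }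
  apply ex_series_scal_R. exists (/ (1 - exp c)). apply is_series_geom.
  rewrite Rabs_pos_eq by (left; apply exp_pos). rewrite <- exp_0. apply exp_increasing; auto.
Qed.

Definition tphi (n : nat) (x : R) (k : nat) : R := INR (S k) ^ n / INR (S k) * exp (INR (S k) * x).
Definition phi (n : nat) (x : R) : R := Series (tphi n x).

Lemma INRS_pos k : 0 < INR (S k).
Proof. apply lt_0_INR; lia. Qed.

Lemma INRS_ge1 k : 1 <= INR (S k).
Proof. rewrite S_INR. pose proof (pos_INR k). lra. Qed.

Lemma tphi_nonneg n x k : 0 <= tphi n x k.
Proof.
  unfold tphi. pose proof (INRS_pos k). apply Rmult_le_pos; [|left; apply exp_pos].
  apply Rmult_le_pos; [apply pow_le; lra | left; apply Rinv_0_lt_compat; lra].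
Qed.

Lemma tphi_le n x k : tphi n x k <= INR (S k) ^ n * exp (INR (S k) * x).
Proof.
  unfold tphi. pose proof (INRS_pos k). pose proof (exp_pos (INR (S k) * x)).
  assert (0 <= INR (S k) ^ n) by (apply pow_le; lra).
  assert (/ INR (S k) <= 1). { rewrite <- Rinv_1. apply Rinv_le_contravar. lra. apply INRS_ge1. }
  assert (0 <= / INR (S k)) by (left; apply Rinv_0_lt_compat; auto).
  unfold Rdiv. assert (0 <= INR (S k) ^ n * exp (INR (S k) * x)) by nra.
  replace (INR (S k) ^ n * / INR (S k) * exp (INR (S k) * x)) with ((INR (S k) ^ n * exp (INR (S k) * x)) * / INR (S k)) by ring.
  nra.
Qed.

Lemma ex_phi n x : x < 0 -> ex_series (tphi n x).
Proof.
  intros Hx. apply (ex_series_le_R _ (fun k => (2 * INR n / (- x)) ^ n * exp (INR (S k) * (x / 2)))).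
  - intros k; split. apply tphi_nonneg. eapply Rle_trans. apply tphi_le.
    replace (INR (S k) * (x / 2)) with (INR (S k) * x / 2) by field.
    apply pow_exp_bound; auto. left; apply INRS_pos.
  - apply ex_series_scal_R. apply ex_series_geomS. lra.
Qed.

Lemma phi_nonneg n x : x < 0 -> 0 <= phi n x.
Proof. intros Hx. apply series_nonneg. intros; apply tphi_nonneg. apply ex_phi; auto. Qed.

Lemma tphi_mono n x y k : x <= y -> tphi n x k <= tphi n y k.
Proof.
  intros H. unfold tphi. apply Rmult_le_compat_l.
  pose proof (INRS_pos k). apply Rmult_le_pos; [apply pow_le; lra | left; apply Rinv_0_lt_compat; lra].
  apply exp_mono. pose proof (INRS_pos k). nra.
Qed.

Lemma phi_mono n x y : x <= y -> y < 0 -> phi n x <= phi n y.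
Proof.
  intros H Hy. apply Series_le. intros k; split. apply tphi_nonneg. apply tphi_mono; auto.
  apply ex_phi; auto.
Qed.

Lemma phi_shift n x y : y <= x -> x < 0 -> phi n y <= exp (y - x) * phi n x.
Proof.
  intros H Hx. unfold phi. rewrite <- Series_scal_l. apply Series_le.
  - intros k; split. apply tphi_nonneg. unfold tphi.
    replace (exp (y - x) * (INR (S k) ^ n / INR (S k) * exp (INR (S k) * x)))
      with (INR (S k) ^ n / INR (S k) * (exp (y - x) * exp (INR (S k) * x))) by ring.
    apply Rmult_le_compat_l.
    pose proof (INRS_pos k). apply Rmult_le_pos; [apply pow_le; lra | left; apply Rinv_0_lt_compat; lra].
    rewrite <- exp_plus. apply exp_mono. rewrite S_INR. pose proof (pos_INR k). nra.
  - apply ex_series_scal_R. apply ex_phi; auto.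
Qed.

Lemma phi_deriv n x : x < 0 -> is_derive (phi n) x (phi (S n) x).
Proof.
  intros Hx. unfold phi.
  apply (tbt (fun k z => tphi n z k) (fun k z => tphi (S n) z k) (fun k z => tphi (S (S n)) z k)
           (tphi (S (S n)) (x / 2)) x (- x / 2)); try lra.
  - intros k z Hz. assert (z <= x / 2) by (apply Rabs_le_between in Hz; lra).
    split; [|split].
    + unfold tphi. generalize (INRS_pos k); generalize (INR (S k)); intros r Hr. auto_derive; auto. simpl. field. lra.
    + unfold tphi. generalize (INRS_pos k); generalize (INR (S k)); intros r Hr. auto_derive; auto. simpl. field. lra.
    + rewrite Rabs_pos_eq by apply tphi_nonneg. apply tphi_mono; auto.
  - apply ex_phi; lra.
  - intros z Hz. apply Rabs_le_between in Hz. apply ex_phi; lra.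
  - apply ex_phi; lra.
Qed.


Definition aj (p j : nat) : R := INR (S j) ^ p.
Definition tD (p n : nat) (t : R) (j : nat) : R := aj p j ^ n * phi n (aj p j * t).
Definition Dn (p n : nat) (t : R) : R := Series (tD p n t).

Lemma aj_ge p j : (1 <= p)%nat -> INR (S j) <= aj p j.
Proof.
  intros Hp. unfold aj. rewrite <- (pow_1 (INR (S j))) at 1. apply Rle_pow; auto. apply INRS_ge1.
Qed.

Lemma aj_pos p j : (1 <= p)%nat -> 0 < aj p j.
Proof. intros Hp. pose proof (aj_ge p j Hp). pose proof (INRS_pos j). lra. Qed.

Lemma tD_nonneg p n t j : (1 <= p)%nat -> t < 0 -> 0 <= tD p n t j.
Proof.
  intros Hp Ht. unfold tD. pose proof (aj_pos p j Hp). apply Rmult_le_pos. apply pow_le; lra.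
  apply phi_nonneg. nra.
Qed.

Lemma ex_D p n t : (1 <= p)%nat -> t < 0 -> ex_series (tD p n t).
Proof.
  intros Hp Ht.
  set (C := (2 * INR n / (- t)) ^ n).
  assert (HC : 0 <= C). { unfold C. apply pow_le. apply Rmult_le_pos; [pose proof (pos_INR n); lra|left; apply Rinv_0_lt_compat; lra]. }
  apply (ex_series_le_R _ (fun j => (exp (- t) * phi n t * C) * exp (INR (S j) * (t / 2)))).
  - intros j; split. apply tD_nonneg; auto. unfold tD.
    pose proof (aj_ge p j Hp) as Ha. pose proof (INRS_pos j). pose proof (INRS_ge1 j).
    assert (Hsh : phi n (aj p j * t) <= exp (aj p j * t - t) * phi n t) by (apply phi_shift; nra).
    assert (Hb : aj p j ^ n * exp (aj p j * t) <= C * exp (aj p j * t / 2)) by (apply pow_exp_bound; lra).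
    assert (He : exp (aj p j * t / 2) <= exp (INR (S j) * (t / 2))) by (apply exp_mono; assert ((aj p j - INR (S j)) * t <= 0) by nra; nra).
    assert (0 <= aj p j ^ n) by (apply pow_le; lra).
    assert (0 <= phi n t) by (apply phi_nonneg; auto).
    pose proof (exp_pos (-t)).
    eapply Rle_trans. apply Rmult_le_compat_l; [auto|exact Hsh].
    replace (aj p j * t - t) with (aj p j * t + - t) by ring. rewrite exp_plus.
    replace (aj p j ^ n * (exp (aj p j * t) * exp (- t) * phi n t)) with
      ((aj p j ^ n * exp (aj p j * t)) * (exp (- t) * phi n t)) by ring.
    replace (exp (- t) * phi n t * C * exp (INR (S j) * (t / 2))) with
      ((C * exp (INR (S j) * (t / 2))) * (exp (- t) * phi n t)) by ring.
    apply Rmult_le_compat_r. nra.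
    eapply Rle_trans. exact Hb. apply Rmult_le_compat_l; auto.
  - apply ex_series_scal_R. apply ex_series_geomS. lra.
Qed.

Lemma Dn_nonneg p n t : (1 <= p)%nat -> t < 0 -> 0 <= Dn p n t.
Proof. intros. apply series_nonneg. intros; apply tD_nonneg; auto. apply ex_D; auto. Qed.

Lemma D_deriv p n t : (1 <= p)%nat -> t < 0 -> is_derive (Dn p n) t (Dn p (S n) t).
Proof.
  intros Hp Ht. unfold Dn.
  apply (tbt (fun j z => tD p n z j) (fun j z => tD p (S n) z j) (fun j z => tD p (S (S n)) z j)
           (tD p (S (S n)) (t / 2)) t (- t / 2)); try lra.
  - intros j z Hz. assert (z <= t / 2) by (apply Rabs_le_between in Hz; lra).
    pose proof (aj_pos p j Hp).
    assert (Hd : forall m, is_derive (fun z => tD p m z j) z (tD p (S m) z j)).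
    { intros m. unfold tD.
      replace (aj p j ^ S m * phi (S m) (aj p j * z)) with (aj p j ^ m * (aj p j * phi (S m) (aj p j * z))) by (simpl; ring).
      apply is_derive_scal.
      apply (is_derive_comp (phi m) (fun z => aj p j * z) z (phi (S m) (aj p j * z)) (aj p j)).
      apply phi_deriv; nra.
      auto_derive; auto; ring. }
    split; [|split]; auto.
    rewrite Rabs_pos_eq by (apply tD_nonneg; [auto|lra]).
    unfold tD. apply Rmult_le_compat_l. apply pow_le; lra. apply phi_mono; nra.
  - apply ex_D; auto; lra.
  - intros z Hz. apply Rabs_le_between in Hz. apply ex_D; auto; lra.
  - apply ex_D; auto.
Qed.


Lemma ln_le_xm1 x : 0 < x -> ln x <= x - 1.
Proof. intros Hx. pose proof (exp_ineq1_le (ln x)). rewrite exp_ln in H; auto; lra. Qed.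

Lemma phi1_val y : y < 0 -> phi 1 y = exp y / (1 - exp y).
Proof.
  intros Hy. assert (He : exp y < 1) by (rewrite <- exp_0; apply exp_increasing; auto).
  pose proof (exp_pos y).
  unfold phi. rewrite (Series_ext _ (fun k => exp y * exp y ^ k)).
  - rewrite Series_scal_l. rewrite (is_series_unique _ (/ (1 - exp y))). unfold Rdiv; auto.
    apply is_series_geom. rewrite Rabs_pos_eq; lra.
  - intros k. unfold tphi. rewrite exp_nat. rewrite pow_1. pose proof (INRS_pos k).
    rewrite Rdiv_diag by lra. change (exp y ^ S k) with (exp y * exp y ^ k). ring.
Qed.

Lemma phi0_le y : y < 0 -> phi 0 y <= exp y / (1 - exp y).
Proof.
  intros Hy. rewrite <- phi1_val; auto. apply Series_le; [|apply ex_phi; auto].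
  intros k; split. apply tphi_nonneg. unfold tphi. rewrite pow_O, pow_1.
  pose proof (INRS_ge1 k). pose proof (exp_pos (INR (S k) * y)).
  apply Rmult_le_compat_r. lra.
  rewrite Rdiv_diag by lra. unfold Rdiv. rewrite Rmult_1_l. rewrite <- Rinv_1. apply Rinv_le_contravar; lra.
Qed.

Lemma phi0_val y : y < 0 -> phi 0 y = - ln (1 - exp y).
Proof.
  intros Hy0.
  set (h := fun y => phi 0 y + ln (1 - exp y)).
  assert (Hd : forall y, y < 0 -> is_derive h y 0).
  { intros z Hz. unfold h. assert (He : exp z < 1) by (rewrite <- exp_0; apply exp_increasing; auto).
    replace 0 with (phi 1 z + (- exp z / (1 - exp z))).
    2: { rewrite phi1_val; auto. field. lra. }
    apply (is_derive_plus (phi 0) (fun y => ln (1 - exp y))). apply phi_deriv; auto.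
    auto_derive. lra. field. lra. }
  assert (Hc : forall y1 y2, y1 < y2 -> y2 < 0 -> h y1 = h y2).
  { intros y1 y2 H12 H2. destruct (MVT_cor2 h (fun _ => 0) y1 y2 H12) as [c [Hc _]].
    intros c Hc. apply is_derive_Reals. apply Hd. lra. lra. }
  assert (Hb : forall y, y <= -1 -> Rabs (h y) <= 4 * exp y).
  { intros z Hz. unfold h. assert (He : exp z <= exp (-1)) by (apply exp_mono; auto).
    assert (He1 : exp (-1) <= / 2). { 
      assert (2 <= exp 1) by (pose proof (exp_ineq1_le 1); lra).
      assert (exp (-1) * exp 1 = 1) by (rewrite <- exp_plus; replace (-1+1) with 0 by ring; apply exp_0).
      pose proof (exp_pos (-1)). nra. }
    pose proof (exp_pos z).
    assert (Hq : exp z / (1 - exp z) <= 2 * exp z).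
    { apply (Rmult_le_reg_r (1 - exp z)). lra. unfold Rdiv. rewrite Rmult_assoc, Rinv_l by lra. nra. }
    pose proof (phi0_le z ltac:(lra)). pose proof (phi_nonneg 0 z ltac:(lra)).
    assert (L1 : ln (1 - exp z) <= 0). { pose proof (ln_le_xm1 (1 - exp z) ltac:(lra)). lra. }
    assert (L2 : - (exp z / (1 - exp z)) <= ln (1 - exp z)).
    { rewrite <- (Rinv_inv (1 - exp z)). rewrite ln_Rinv. 2: apply Rinv_0_lt_compat; lra.
      pose proof (ln_le_xm1 (/ (1 - exp z))). 
      assert (/ (1 - exp z) - 1 = exp z / (1 - exp z)) by (field; lra).
      assert (0 < / (1 - exp z)) by (apply Rinv_0_lt_compat; lra). 
      rewrite Rinv_inv. lra. }
    apply Rabs_le. lra. }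
  apply Rminus_diag_uniq. replace (phi 0 y - - ln (1 - exp y)) with (h y) by (unfold h; ring).
  replace (h y) with (h y - 0) by ring. apply cond_eq. intros eps Heps.
  set (z := Rmin (Rmin (y - 1) (-1)) (ln (eps / 8))).
  assert (Hz1 : z <= -1) by (unfold z; pose proof (Rmin_l (Rmin (y - 1) (-1)) (ln (eps / 8))); pose proof (Rmin_r (y-1) (-1)); pose proof (Rmin_l (y-1) (-1)); lra).
  assert (Hzy : z < y) by (unfold z; pose proof (Rmin_l (Rmin (y - 1) (-1)) (ln (eps / 8))); pose proof (Rmin_l (y-1) (-1)); lra).
  assert (Hze : exp z <= eps / 8).
  { rewrite <- (exp_ln (eps / 8)) by lra. apply exp_mono. apply Rmin_r. }
  rewrite <- (Hc z y Hzy Hy0). rewrite !Rminus_0_r.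
  pose proof (Hb z Hz1). lra.
Qed.

Lemma Fp_D p t : (1 <= p)%nat -> t < 0 -> Fp p t = Dn p 0 t.
Proof.
  intros Hp Ht. unfold Fp, Dn. rewrite <- Series_opp. apply Series_ext. intros j.
  unfold tD. simpl. rewrite Rmult_1_l. rewrite phi0_val. unfold aj. auto.
  pose proof (aj_pos p j Hp). nra.
Qed.

Lemma Derive_n_Fp p m t : (1 <= p)%nat -> t < 0 -> Derive_n (Fp p) m t = Dn p m t.
Proof.
  intros Hp. revert t. induction m; intros t Ht.
  - simpl. apply Fp_D; auto.
  - simpl. rewrite (Derive_ext_loc _ (Dn p m)).
    + apply is_derive_unique. apply D_deriv; auto.
    + exists (mkposreal (- t) ltac:(lra)). intros y Hy. apply IHm.
      unfold ball in Hy; simpl in Hy; unfold AbsRing_ball, abs, minus, plus, opp in Hy; simpl in Hy.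
      apply Rabs_lt_between in Hy. lra.
Qed.


Section Riemann.
Variable g : R -> R.
Variables M c I0 : R.
Hypothesis g_cont : forall y, continuous g y.
Hypothesis g_bnd : forall y, 0 <= y -> 0 <= g y <= M.
Hypothesis c_nonneg : 0 <= c.
Hypothesis g_inc : forall y1 y2, 0 <= y1 -> y1 <= y2 -> y2 <= c -> g y1 <= g y2.
Hypothesis g_dec : forall y1 y2, c <= y1 -> y1 <= y2 -> g y2 <= g y1.
Hypothesis J_le : forall b, 0 <= b -> RInt g 0 b <= I0.
Hypothesis J_lim : forall eps, 0 < eps -> exists B, forall b, B <= b -> I0 - eps <= RInt g 0 b.

Lemma ex_RInt_g a b : ex_RInt g a b.
Proof. apply (@ex_RInt_continuous R_CompleteNormedModule). intros; apply g_cont. Qed.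

Lemma RInt_chasles_g a b d : RInt g a d = RInt g a b + RInt g b d.
Proof. rewrite <- (RInt_Chasles g a b d); auto; apply ex_RInt_g. Qed.

Lemma RInt_const_bounds a h lo hi : 0 <= h -> (forall y, a < y < a + h -> lo <= g y <= hi) ->
  h * lo <= RInt g a (a + h) <= h * hi.
Proof.
  intros Hh H. destruct Hh as [Hh|Hh].
  2: { subst. rewrite Rplus_0_r, RInt_point. unfold zero; simpl. lra. }
  split.
  - replace (h * lo) with (RInt (fun _ => lo) a (a + h)).
    2: { rewrite RInt_const. unfold scal; simpl; unfold mult; simpl. ring. }
    apply RInt_le. lra. apply ex_RInt_const. apply ex_RInt_g. intros; apply H; auto.
  - replace (h * hi) with (RInt (fun _ => hi) a (a + h)).
    2: { rewrite RInt_const. unfold scal; simpl; unfold mult; simpl. ring. }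
    apply RInt_le. lra. apply ex_RInt_g. apply ex_RInt_const. intros; apply H; auto.
Qed.

Variable h : R.
Hypothesis h_pos : 0 < h.

Fixpoint rs (J : nat) : R := match J with 0%nat => 0 | S J => rs J + h * g (INR (S J) * h) end.
Definition EJ (J : nat) : R := rs J - RInt g 0 (INR J * h).

Lemma EJ_S J : EJ (S J) = EJ J + h * g (INR (S J) * h) - RInt g (INR J * h) (INR J * h + h).
Proof.
  unfold EJ. change (rs (S J)) with (rs J + h * g (INR (S J) * h)). rewrite (RInt_chasles_g 0 (INR J * h) (INR (S J) * h)).
  replace (INR (S J) * h) with (INR J * h + h) by (rewrite S_INR; ring). ring.
Qed.

Lemma EJ_inv J : (INR J * h <= c -> 0 <= EJ J <= h * g (INR J * h)) /\ EJ J <= 2 * h * M /\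
  - 2 * h * M <= EJ J - h * g (INR J * h).
Proof.
  induction J.
  - unfold EJ. simpl. rewrite Rmult_0_l, RInt_point. unfold zero; simpl.
    pose proof (g_bnd 0 (Rle_refl 0)). repeat match goal with |- _ /\ _ => split | |- _ -> _ => intro end; nra.
  - destruct IHJ as [I1 [I2 I3]]. rewrite EJ_S.
    set (a := INR J * h) in *. assert (Ha : 0 <= a) by (unfold a; pose proof (pos_INR J); nra).
    assert (Hb : INR (S J) * h = a + h) by (unfold a; rewrite S_INR; ring). rewrite Hb.
    pose proof (g_bnd a Ha) as Ga. pose proof (g_bnd (a + h) ltac:(lra)) as Gb.
    assert (Ib : 0 <= RInt g a (a + h) <= h * M).
    { replace 0 with (h * 0) by ring. apply RInt_const_bounds; [lra|]. intros y Hy; apply g_bnd; lra. }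
    assert (P1 : 0 <= h * g a <= h * M) by (split; apply Rmult_le_compat_l || apply Rmult_le_pos; lra).
    assert (P2 : 0 <= h * g (a + h) <= h * M) by (split; apply Rmult_le_compat_l || apply Rmult_le_pos; lra).
    destruct (Rle_or_lt (a + h) c) as [C1|C1].
    + assert (Hi : h * g a <= RInt g a (a + h) <= h * g (a + h)).
      { apply RInt_const_bounds; [lra|]. intros y Hy. split; apply g_inc; lra. }
      specialize (I1 ltac:(lra)). repeat match goal with |- _ /\ _ => split | |- _ -> _ => intro end; lra.
    + destruct (Rle_or_lt a c) as [C2|C2].
      * specialize (I1 C2). repeat match goal with |- _ /\ _ => split | |- _ -> _ => intro end; lra.
      * assert (Hi : h * g (a + h) <= RInt g a (a + h) <= h * g a).
        { apply RInt_const_bounds; [lra|]. intros y Hy. split; apply g_dec; lra. }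
        repeat match goal with |- _ /\ _ => split | |- _ -> _ => intro end; lra.
Qed.

Lemma EJ_large J : c <= h -> EJ (S J) <= h * g h.
Proof.
  intros Hc. induction J.
  - unfold EJ. simpl. rewrite Rmult_1_l, Rplus_0_l.
    assert (0 <= RInt g 0 h). { apply RInt_ge_0. lra. apply ex_RInt_g. intros; apply g_bnd; lra. }
    lra.
  - rewrite EJ_S. set (a := INR (S J) * h).
    assert (Ha : h <= a) by (unfold a; pose proof (INR_le 1 (S J)); rewrite S_INR; pose proof (pos_INR J); nra).
    replace (INR (S (S J)) * h) with (a + h) by (unfold a; rewrite (S_INR (S J)); ring).
    assert (Hi : h * g (a + h) <= RInt g a (a + h)).
    { replace (RInt g a (a + h)) with (RInt g a (a+h)) by auto.
      apply (RInt_const_bounds a h (g (a + h)) (g a)); [lra|]. intros y Hy. split; apply g_dec; lra. }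
    lra.
Qed.

Definition term (j : nat) : R := h * g (INR (S j) * h).

Lemma sum_rs J : sum_n term J = rs (S J).
Proof.
  induction J. rewrite sum_O. unfold term. change (rs 1) with (rs 0 + h * g (INR 1 * h)). change (rs 0) with 0. rewrite Rplus_0_l. reflexivity.
  rewrite sum_Sn, IHJ. change (rs (S (S J))) with (rs (S J) + h * g (INR (S (S J)) * h)). unfold term. reflexivity.
Qed.

Lemma term_nonneg j : 0 <= term j.
Proof. unfold term. pose proof (g_bnd (INR (S j) * h)). pose proof (pos_INR (S j)). 
  apply Rmult_le_pos; [lra|]. apply H; nra. Qed.

Lemma riemann : ex_series term /\ Rabs (Series term - I0) <= 2 * h * M.
Proof.
  assert (Hup : forall J, sum_n term J <= I0 + 2 * h * M).
  { intros J. rewrite sum_rs. destruct (EJ_inv (S J)) as [_ [I2 _]]. unfold EJ in I2.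
    pose proof (J_le (INR (S J) * h) ltac:(pose proof (pos_INR (S J)); nra)). lra. }
  destruct (nonneg_bounded term _ term_nonneg Hup) as [Hex HS]. split; auto.
  apply Rabs_le. split; [|lra].
  cut (forall eps, 0 < eps -> I0 - 2 * h * M - eps <= Series term).
  { intros H. apply Rnot_lt_le. intros Hlt.
    specialize (H ((I0 - 2 * h * M - Series term) / 2) ltac:(lra)). lra. }
  intros eps Heps. destruct (J_lim eps Heps) as [B HB].
  destruct (INR_unbounded (B / h)) as [N HN].
  assert (HBN : B <= INR (S N) * h).
  { rewrite S_INR. apply (Rmult_gt_compat_r h) in HN; auto. unfold Rdiv in HN.
    rewrite Rmult_assoc, Rinv_l in HN by lra. nra. }
  specialize (HB _ HBN).
  destruct (EJ_inv (S N)) as [_ [_ I3]]. unfold EJ in I3.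
  pose proof (partial_le_series term N term_nonneg Hex). rewrite sum_rs in H.
  pose proof (g_bnd (INR (S N) * h) ltac:(pose proof (pos_INR (S N)); nra)). nra.
Qed.

Lemma riemann_large : c <= h -> Series term <= I0 + h * g h.
Proof.
  intros Hc. destruct riemann as [Hex _].
  assert (Hup : forall J, sum_n term J <= I0 + h * g h).
  { intros J. rewrite sum_rs. pose proof (EJ_large J Hc). unfold EJ in H.
    pose proof (J_le (INR (S J) * h) ltac:(pose proof (pos_INR (S J)); nra)). lra. }
  apply (nonneg_bounded term _ term_nonneg Hup).
Qed.

End Riemann.


Lemma G_q m t : (1 <= m)%nat -> t ^ m * exp (- t) = (t * exp (- t / INR m)) ^ m.
Proof.
  intros Hm. rewrite Rpow_mult_distr, <- exp_nat. f_equal. f_equal. field.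
  apply not_0_INR; lia.
Qed.

Lemma Ginc m t1 t2 : 0 <= t1 -> t1 <= t2 -> t2 <= INR m -> t1 ^ m * exp (- t1) <= t2 ^ m * exp (- t2).
Proof.
  intros H1 H12 H2. destruct m.
  - simpl in H2. assert (t1 = t2) by lra. subst; lra.
  - rewrite !G_q by lia. apply pow_incr. set (n := INR (S m)) in *.
    assert (Hn : 0 < n) by apply INRS_pos.
    split. apply Rmult_le_pos; [lra|left; apply exp_pos].
    set (d := t2 - t1).
    assert (E : exp (- t1 / n) = exp (- t2 / n) * exp (d / n)) by (rewrite <- exp_plus; f_equal; unfold d; field; lra).
    rewrite E. pose proof (exp_pos (- t2 / n)).
    assert (t1 * exp (d / n) <= t2).
    { assert (Ee : exp (- (d / n)) * exp (d / n) = 1) by (rewrite <- exp_plus; replace (- (d/n) + d/n) with 0 by ring; apply exp_0).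
      pose proof (exp_ineq1_le (- (d / n))). pose proof (exp_pos (d / n)).
      assert (t2 * (1 - d / n) >= t1).
      { unfold d. apply Rle_ge. apply (Rmult_le_reg_r n); auto.
        replace (t2 * (1 - (t2 - t1) / n) * n) with (t2 * n - t2 * (t2 - t1)) by (field; lra). nra. }
      assert (Ht : t1 <= t2 * exp (- (d / n))) by nra.
      apply (Rmult_le_compat_r (exp (d / n))) in Ht; [|lra].
      rewrite Rmult_assoc, Ee in Ht. lra. }
    nra.
Qed.

Lemma Gdec m t1 t2 : INR m <= t1 -> t1 <= t2 -> t2 ^ m * exp (- t2) <= t1 ^ m * exp (- t1).
Proof.
  intros H1 H12. destruct m.
  - simpl. rewrite !Rmult_1_l. apply exp_mono. lra.
  - rewrite !G_q by lia. apply pow_incr. set (n := INR (S m)) in *.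
    assert (Hn : 0 < n) by apply INRS_pos.
    split. apply Rmult_le_pos; [lra|left; apply exp_pos].
    set (d := t2 - t1).
    assert (E : exp (- t1 / n) = exp (- t2 / n) * exp (d / n)) by (rewrite <- exp_plus; f_equal; unfold d; field; lra).
    rewrite E. pose proof (exp_pos (- t2 / n)).
    assert (t2 <= t1 * exp (d / n)).
    { pose proof (exp_ineq1_le (d / n)).
      assert (t1 * (1 + d / n) >= t2).
      { unfold d. apply Rle_ge. apply (Rmult_le_reg_r n); auto.
        replace (t1 * (1 + (t2 - t1) / n) * n) with (t1 * n + t1 * (t2 - t1)) by (field; lra). nra. }
      assert (0 <= t1) by lra. nra. }
    nra.
Qed.


Section G.
Variables p m : nat.
Hypothesis Hp : (1 <= p)%nat.

Definition gf (y : R) : R := (y ^ p) ^ m * exp (- y ^ p).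
Definition Kc : R := (2 * INR m) ^ m.

Lemma Kc_nonneg : 0 <= Kc.
Proof. unfold Kc. apply pow_le. pose proof (pos_INR m); lra. Qed.

Lemma gf_nonneg y : 0 <= y -> 0 <= gf y.
Proof.
  intros Hy. unfold gf. apply Rmult_le_pos. apply pow_le, pow_le; auto. left; apply exp_pos.
Qed.

Lemma gf_bexp y : 0 <= y -> gf y <= Kc * exp (- y ^ p / 2).
Proof.
  intros Hy. unfold gf, Kc. pose proof (pow_exp_bound m (-1) (y ^ p) ltac:(lra) (pow_le _ _ Hy)).
  replace (y ^ p * -1) with (- y ^ p) in H by ring.
  replace (2 * INR m / - -1) with (2 * INR m) in H by field.
  exact H.
Qed.

Lemma gf_le_K y : 0 <= y -> gf y <= Kc.
Proof.
  intros Hy. eapply Rle_trans. apply gf_bexp; auto.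
  rewrite <- (Rmult_1_r Kc) at 2. apply Rmult_le_compat_l. apply Kc_nonneg.
  rewrite <- exp_0. apply exp_mono. pose proof (pow_le y p Hy). lra.
Qed.

Lemma gf_maj y : 0 <= y -> gf y <= Kc * exp (1 / 2 - y / 2).
Proof.
  intros Hy. eapply Rle_trans. apply gf_bexp; auto.
  apply Rmult_le_compat_l. apply Kc_nonneg. apply exp_mono.
  destruct (Rle_or_lt y 1). pose proof (pow_le y p Hy). lra.
  pose proof (Rle_pow y 1 p ltac:(lra) Hp). rewrite pow_1 in H0. lra.
Qed.

Lemma ygf_bound y : 0 <= y -> y * gf y <= 2 * Kc * exp (1 / 2).
Proof.
  intros Hy. pose proof (gf_maj y Hy). pose proof Kc_nonneg.
  assert (y * exp (- (y / 2)) <= 2).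
  { pose proof (exp_ineq1_le (y / 2)).
    assert (exp (y / 2) * exp (- (y / 2)) = 1) by (rewrite <- exp_plus; replace (y/2 + - (y/2)) with 0 by ring; apply exp_0).
    pose proof (exp_pos (- (y / 2))). nra. }
  replace (exp (1 / 2 - y / 2)) with (exp (1/2) * exp (- (y / 2))) in H by (rewrite <- exp_plus; f_equal; ring).
  pose proof (exp_pos (1/2)). pose proof (exp_pos (- (y / 2))).
  apply Rle_trans with (y * (Kc * (exp (1 / 2) * exp (- (y / 2))))).
  apply Rmult_le_compat_l; auto.
  replace (y * (Kc * (exp (1 / 2) * exp (- (y / 2))))) with ((Kc * exp (1/2)) * (y * exp (- (y / 2)))) by ring.
  assert (0 <= Kc * exp (1/2)) by nra. nra.
Qed.

Lemma gf_cont y : continuous gf y.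
Proof. apply (@ex_derive_continuous R_AbsRing R_NormedModule). unfold gf. auto_derive. auto. Qed.

Lemma ex_RInt_gf a b : ex_RInt gf a b.
Proof. apply (@ex_RInt_continuous R_CompleteNormedModule). intros; apply gf_cont. Qed.

Lemma J_mono b1 b2 : 0 <= b1 -> b1 <= b2 -> RInt gf 0 b1 <= RInt gf 0 b2.
Proof.
  intros H1 H2. rewrite <- (RInt_Chasles gf 0 b1 b2) by apply ex_RInt_gf.
  unfold plus; simpl. assert (0 <= RInt gf b1 b2). 
  { apply RInt_ge_0; auto. apply ex_RInt_gf. intros; apply gf_nonneg; lra. } lra.
Qed.

Lemma J_bnd b : 0 <= b -> RInt gf 0 b <= 2 * Kc * exp (1 / 2).
Proof.
  intros Hb.
  set (F := fun y => - 2 * Kc * exp (1 / 2 - y / 2)).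
  assert (HI : is_RInt (fun y => Kc * exp (1 / 2 - y / 2)) 0 b (minus (F b) (F 0))).
  { apply (is_RInt_derive F). intros x _. unfold F. auto_derive; auto. replace (1 / 2 + - (x * / 2)) with (1 / 2 - x / 2) by field. field.
    intros x _. apply (@ex_derive_continuous R_AbsRing R_NormedModule). auto_derive; auto. }
  apply (@is_RInt_unique R_CompleteNormedModule) in HI.
  apply Rle_trans with (RInt (fun y => Kc * exp (1 / 2 - y / 2)) 0 b).
  - apply RInt_le; auto. apply ex_RInt_gf.
    apply (@ex_RInt_continuous R_CompleteNormedModule). intros; apply (@ex_derive_continuous R_AbsRing R_NormedModule); auto_derive; auto.
    intros; apply gf_maj; lra.
  - rewrite HI. unfold F, minus, plus, opp; simpl. 
    replace (1/2 - 0/2) with (1/2) by field. pose proof (exp_pos (1 / 2 - b / 2)). pose proof Kc_nonneg. nra.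
Qed.

Definition I0 : R := real (Lim_seq (fun n => RInt gf 0 (INR n))).

Lemma I0_lim : is_lim_seq (fun n => RInt gf 0 (INR n)) I0.
Proof.
  unfold I0. apply Lim_seq_correct'. apply (ex_finite_lim_seq_incr _ (2 * Kc * exp (1 / 2))).
  intros n. apply J_mono. apply pos_INR. rewrite S_INR; lra.
  intros n. apply J_bnd. apply pos_INR.
Qed.

Lemma J_le b : 0 <= b -> RInt gf 0 b <= I0.
Proof.
  intros Hb. destruct (INR_unbounded b) as [n Hn].
  apply Rle_trans with (RInt gf 0 (INR n)). apply J_mono; lra.
  apply (is_lim_seq_incr_compare _ I0 I0_lim). intros k. apply J_mono. apply pos_INR. rewrite S_INR; lra.
Qed.

Lemma J_lim eps : 0 < eps -> exists B, forall b, B <= b -> I0 - eps <= RInt gf 0 b.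
Proof.
  intros He. pose proof I0_lim as L. apply is_lim_seq_spec in L.
  destruct (L (mkposreal eps He)) as [N HN]. simpl in HN.
  exists (INR N). intros b Hb. specialize (HN N (Nat.le_refl N)).
  apply Rabs_lt_between in HN. pose proof (J_mono (INR N) b (pos_INR N) Hb). lra.
Qed.

Lemma I0_pos : 0 < I0.
Proof.
  apply Rlt_le_trans with (RInt gf 0 1); [|apply J_le; lra].
  apply RInt_gt_0. lra.
  - intros x Hx. unfold gf. apply Rmult_lt_0_compat; [|apply exp_pos]. apply pow_lt, pow_lt; lra.
  - intros; apply gf_cont.
Qed.

Definition cval : R := match m with O => 0 | _ => Rpower (INR m) (/ INR p) end.

Lemma cval_nonneg : 0 <= cval.
Proof. unfold cval. destruct m. lra. unfold Rpower. left; apply exp_pos. Qed.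

Lemma cval_pow : cval ^ p = INR m.
Proof.
  unfold cval. destruct m.
  - simpl. destruct p. lia. simpl. ring.
  - assert (0 < INR (S n)) by apply INRS_pos.
    assert (0 < INR p) by (apply lt_0_INR; lia).
    rewrite <- Rpower_pow by (unfold Rpower; apply exp_pos).
    rewrite Rpower_mult. rewrite Rinv_l by lra. apply Rpower_1; auto.
Qed.

Lemma gf_inc y1 y2 : 0 <= y1 -> y1 <= y2 -> y2 <= cval -> gf y1 <= gf y2.
Proof.
  intros H1 H2 H3. unfold gf. apply Ginc.
  apply pow_le; auto. apply pow_incr; lra. rewrite <- cval_pow. apply pow_incr; lra.
Qed.

Lemma gf_dec y1 y2 : cval <= y1 -> y1 <= y2 -> gf y2 <= gf y1.
Proof.
  intros H1 H2. pose proof cval_nonneg. unfold gf. apply Gdec.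
  rewrite <- cval_pow. apply pow_incr; lra. apply pow_incr; lra.
Qed.

Definition Rh (h : R) : R := Series (term gf h).

Lemma Rh_spec h : 0 < h -> ex_series (term gf h) /\ Rabs (Rh h - I0) <= 2 * h * Kc.
Proof.
  intros Hh. apply (riemann gf Kc cval I0); auto.
  apply gf_cont. intros y Hy; split; [apply gf_nonneg|apply gf_le_K]; auto.
  apply cval_nonneg. apply gf_inc. apply gf_dec. apply J_le. apply J_lim.
Qed.

Definition Bd : R := I0 + 2 * cval * Kc + 2 * Kc * exp (1 / 2).

Lemma Rh_bound h : 0 < h -> 0 <= Rh h <= Bd.
Proof.
  intros Hh. destruct (Rh_spec h Hh) as [Hex Hs].
  pose proof cval_nonneg. pose proof Kc_nonneg. pose proof (exp_pos (1/2)). pose proof I0_pos.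
  split. apply series_nonneg; auto. intros j. apply (term_nonneg gf Kc); auto.
  intros y Hy; split; [apply gf_nonneg|apply gf_le_K]; auto.
  unfold Bd. destruct (Rle_or_lt h cval).
  - apply Rabs_le_between' in Hs. assert (2 * h * Kc <= 2 * cval * Kc) by nra. 
    assert (0 <= 2 * Kc * exp (1 / 2)) by nra. lra.
  - pose proof (riemann_large gf Kc cval I0 gf_cont) as RL.
    assert (Rh h <= I0 + h * gf h).
    { apply RL; auto. intros y Hy; split; [apply gf_nonneg|apply gf_le_K]; auto.
      apply gf_inc. apply gf_dec. apply J_le. apply J_lim. lra. }
    pose proof (ygf_bound h ltac:(lra)). assert (0 <= 2 * cval * Kc) by nra. lra.
Qed.

End G.


Section Gam.
Variables p m : nat.
Hypothesis Hp : (1 <= p)%nat.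

Definition xg : R := INR m + / INR p.
Definition fg (t : R) : R := Rpower t (xg - 1) * exp (- t).

Lemma RInt_scal_R (f : R -> R) a b c : ex_RInt f a b -> RInt (fun y => c * f y) a b = c * RInt f a b.
Proof.
  intros H. apply (@is_RInt_unique R_CompleteNormedModule).
  apply (@is_RInt_scal R_CompleteNormedModule f a b c (RInt f a b)).
  apply (@RInt_correct R_CompleteNormedModule). auto.
Qed.

Lemma INRp_pos : 0 < INR p.
Proof. apply lt_0_INR; lia. Qed.

Lemma rpow_root a : 0 < a -> Rpower a (/ INR p) ^ p = a.
Proof.
  intros Ha. pose proof INRp_pos. rewrite <- Rpower_pow by (unfold Rpower; apply exp_pos).
  rewrite Rpower_mult, Rinv_l by lra. apply Rpower_1; auto.
Qed.

Lemma rpow_pos a z : 0 < Rpower a z.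
Proof. unfold Rpower; apply exp_pos. Qed.

Lemma fg_cont t : 0 < t -> continuous fg t.
Proof.
  intros Ht. apply (@ex_derive_continuous R_AbsRing R_NormedModule). unfold fg, Rpower. auto_derive. auto.
Qed.

Lemma key_id y : 0 < y -> INR p * y ^ pred p * fg (y ^ p) = INR p * gf p m y.
Proof.
  intros Hy. unfold fg, gf. 
  assert (E1 : y ^ pred p = exp (INR (pred p) * ln y)).
  { rewrite <- Rpower_pow by auto. reflexivity. }
  assert (E2 : (y ^ p) ^ m = exp (INR (p * m) * ln y)).
  { rewrite <- pow_mult. rewrite <- Rpower_pow by auto. reflexivity. }
  assert (E3 : Rpower (y ^ p) (xg - 1) = exp ((xg - 1) * (INR p * ln y))).
  { unfold Rpower. rewrite ln_pow; auto. }
  rewrite E1, E2, E3.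
  replace (INR p * exp (INR (pred p) * ln y) * (exp ((xg - 1) * (INR p * ln y)) * exp (- y ^ p)))
    with (INR p * (exp (INR (pred p) * ln y + (xg - 1) * (INR p * ln y)) * exp (- y ^ p))) by (rewrite exp_plus; ring).
  do 3 f_equal. unfold xg. rewrite mult_INR.
  assert (INR (pred p) = INR p - 1). { destruct p. lia. simpl pred. rewrite S_INR. ring. }
  rewrite H. pose proof INRp_pos. field. lra.
Qed.

Lemma subst_int al be : 0 < al -> 0 < be ->
  RInt fg (al ^ p) (be ^ p) = INR p * (RInt (gf p m) 0 be - RInt (gf p m) 0 al).
Proof.
  intros Ha Hb.
  assert (HI := is_RInt_comp fg (fun y => y ^ p) (fun y => INR p * y ^ pred p) al be).
  assert (Hmin : forall x, Rmin al be <= x <= Rmax al be -> 0 < x).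
  { intros x Hx. pose proof (Rmin_glb_lt al be 0). destruct Hx. 
    assert (0 < Rmin al be) by (apply Rmin_glb_lt; auto). lra. }
  specialize (HI ltac:(intros x Hx; apply fg_cont; apply pow_lt; apply Hmin; auto)).
  specialize (HI ltac:(intros x Hx; split; [auto_derive; auto; ring|
     apply (@ex_derive_continuous R_AbsRing R_NormedModule); auto_derive; auto])).
  apply (@is_RInt_unique R_CompleteNormedModule) in HI.
  rewrite <- HI.
  rewrite (RInt_ext _ (fun y => INR p * gf p m y)).
  2: { intros x Hx. unfold scal; simpl; unfold mult; simpl. rewrite <- key_id.
       ring. apply Hmin. lra. }
  rewrite RInt_scal_R by apply ex_RInt_gf.
  rewrite <- (RInt_Chasles (gf p m) 0 al be) by apply ex_RInt_gf.
  unfold scal, plus; simpl; unfold mult; simpl. ring.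
Qed.

Lemma Gamma_val : Gamma xg = INR p * I0 p m.
Proof.
  unfold Gamma. apply is_RInt_gen_unique.
  apply filterlimi_locally.
  intros eps.
  pose proof INRp_pos as Hp0. pose proof (Kc_nonneg m) as HK.
  set (e2 := eps / (2 * INR p)).
  assert (He2 : 0 < e2) by (unfold e2; apply Rdiv_lt_0_compat; [apply cond_pos|lra]).
  destruct (J_lim p m Hp e2 He2) as [B0 HB0].
  set (B := Rmax B0 1).
  set (del := e2 / (Kc m + 1)).
  assert (Hdel : 0 < del) by (unfold del; apply Rdiv_lt_0_compat; lra).
  assert (Hdp : 0 < del ^ p) by (apply pow_lt; auto).
  apply (Filter_prod _ _ _ (fun a => 0 < a < del ^ p) (fun b => B ^ p < b)).
  - exists (mkposreal _ Hdp). intros y Hy Hy0. simpl in Hy.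
    unfold ball in Hy; simpl in Hy; unfold AbsRing_ball, abs, minus, plus, opp in Hy; simpl in Hy.
    apply Rabs_lt_between in Hy. lra.
  - exists (B ^ p). auto.
  - intros a b [Ha Had] Hb. simpl.
    assert (HB1 : 1 <= B) by (apply Rmax_r).
    assert (Hbp : 0 < b) by (pose proof (pow_le B p ltac:(lra)); lra).
    exists (RInt fg a b). split.
    + apply (@RInt_correct R_CompleteNormedModule). apply (@ex_RInt_continuous R_CompleteNormedModule).
      intros z Hz. apply fg_cont. assert (0 < Rmin a b) by (apply Rmin_glb_lt; auto).
      lra.
    + set (al := Rpower a (/ INR p)). set (be := Rpower b (/ INR p)).
      assert (Hal : 0 < al) by apply rpow_pos. assert (Hbe : 0 < be) by apply rpow_pos.
      replace (RInt fg a b) with (RInt fg (al ^ p) (be ^ p)) by (unfold al, be; rewrite !rpow_root; auto).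
      rewrite subst_int; auto.
      assert (Hbe2 : B <= be).
      { apply Rnot_lt_le. intros Hc. assert (be ^ p <= B ^ p) by (apply pow_incr; lra).
        unfold be in H; rewrite rpow_root in H; lra. }
      assert (Hal2 : al < del).
      { apply Rnot_le_lt. intros Hc. assert (del ^ p <= al ^ p) by (apply pow_incr; lra).
        unfold al in H; rewrite rpow_root in H; lra. }
      assert (J1 : I0 p m - e2 <= RInt (gf p m) 0 be) by (apply HB0; unfold B in Hbe2; pose proof (Rmax_l B0 1); lra).
      assert (J2 : RInt (gf p m) 0 be <= I0 p m) by (apply J_le; [auto|lra]).
      assert (J3 : 0 <= RInt (gf p m) 0 al) by (apply RInt_ge_0; [lra|apply ex_RInt_gf|intros; apply gf_nonneg; lra]).
      assert (J4 : RInt (gf p m) 0 al <= al * Kc m).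
      { replace (al * Kc m) with (RInt (fun _ => Kc m) 0 al).
        2: { rewrite RInt_const. unfold scal; simpl; unfold mult; simpl. ring. }
        apply RInt_le. lra. apply ex_RInt_gf. apply ex_RInt_const. intros; apply gf_le_K; lra. }
      assert (J5 : al * Kc m < e2).
      { unfold del in Hal2. apply (Rmult_lt_compat_r (Kc m + 1)) in Hal2; [|lra].
        unfold Rdiv in Hal2. rewrite Rmult_assoc, Rinv_l in Hal2 by lra. nra. }
      unfold ball; simpl; unfold AbsRing_ball, abs, minus, plus, opp; simpl.
      apply Rabs_lt_between. 
      assert (Hee : INR p * e2 = eps / 2) by (unfold e2; field; lra).
      pose proof (cond_pos eps).
      split; nra.
Qed.

End Gam.


Lemma pseries_step a x : 0 < a -> 2 <= x ->
  / Rpower x (1 + a) <= (Rpower (x - 1) (- a) - Rpower x (- a)) / a.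
Proof.
  intros Ha Hx. unfold Rpower.
  assert (L : ln (x - 1) <= ln x - / x).
  { replace (x - 1) with (x * ((x - 1) / x)) by (field; lra).
    rewrite ln_mult by (try apply Rdiv_lt_0_compat; lra).
    pose proof (ln_le_xm1 ((x - 1) / x) ltac:(apply Rdiv_lt_0_compat; lra)).
    replace ((x - 1) / x - 1) with (- / x) in H by (field; lra). lra. }
  set (E := exp (- a * ln x)).
  assert (HE : 0 < E) by apply exp_pos.
  assert (E1 : / exp ((1 + a) * ln x) = E / x).
  { unfold E. rewrite <- exp_Ropp. replace (- ((1 + a) * ln x)) with (- a * ln x + - ln x) by ring.
    rewrite exp_plus, exp_Ropp, exp_ln by lra. field. lra. }
  assert (E2 : E * (1 + a / x) <= exp (- a * ln (x - 1))).
  { apply Rle_trans with (E * exp (a / x)).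
    apply Rmult_le_compat_l; [lra|]. pose proof (exp_ineq1_le (a / x)); lra.
    unfold E. rewrite <- exp_plus. apply exp_mono.
    assert (a * ln (x - 1) <= a * (ln x - / x)) by (apply Rmult_le_compat_l; lra).
    unfold Rdiv. nra. }
  rewrite E1. fold E. apply (Rmult_le_reg_r a); auto.
  replace ((exp (- a * ln (x - 1)) - E) / a * a) with (exp (- a * ln (x - 1)) - E) by (field; lra).
  replace (E / x * a) with (E * (a / x)) by (field; lra). nra.
Qed.

Definition wz (p : nat) (k : nat) : R := / Rpower (INR (S k)) (1 + / INR p).

Lemma wz_pos p k : 0 < wz p k.
Proof. unfold wz. apply Rinv_0_lt_compat. unfold Rpower; apply exp_pos. Qed.

Lemma wz_partial p N : (1 <= p)%nat -> sum_n (wz p) N <= 1 + (1 - Rpower (INR (S N)) (- / INR p)) / / INR p.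
Proof.
  intros Hp. assert (Ha : 0 < / INR p) by (apply Rinv_0_lt_compat, lt_0_INR; lia).
  induction N.
  - rewrite sum_O. unfold wz. replace (INR 1) with 1 by reflexivity. assert (R1 : forall z, Rpower 1 z = 1) by (intros z; unfold Rpower; rewrite ln_1, Rmult_0_r; apply exp_0). rewrite !R1.
    rewrite Rinv_1. unfold Rdiv. lra.
  - rewrite sum_Sn. change (plus (sum_n (wz p) N) (wz p (S N))) with (sum_n (wz p) N + wz p (S N)).
    pose proof (pseries_step (/ INR p) (INR (S (S N))) Ha).
    replace (INR (S (S N)) - 1) with (INR (S N)) in H by (rewrite (S_INR (S N)); ring).
    assert (2 <= INR (S (S N))) by (rewrite !S_INR; pose proof (pos_INR N); lra).
    specialize (H H0). change (wz p (S N)) with (/ Rpower (INR (S (S N))) (1 + / INR p)).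
    unfold Rdiv in *. lra.
Qed.

Lemma ex_wz p : (1 <= p)%nat -> ex_series (wz p).
Proof.
  intros Hp. apply (nonneg_bounded _ (1 + 1 / / INR p)).
  intros k; left; apply wz_pos.
  intros N. eapply Rle_trans. apply wz_partial; auto.
  assert (0 < / INR p) by (apply Rinv_0_lt_compat, lt_0_INR; lia).
  assert (0 < Rpower (INR (S N)) (- / INR p)) by (unfold Rpower; apply exp_pos).
  unfold Rdiv. apply Rplus_le_compat_l. apply Rmult_le_compat_r. left; apply Rinv_0_lt_compat; auto. lra.
Qed.

Lemma sum_n_le_upto (a b : nat -> R) N : (forall k, (k <= N)%nat -> a k <= b k) -> sum_n a N <= sum_n b N.
Proof.
  induction N; intros H. rewrite !sum_O; apply H; lia.
  rewrite !sum_Sn; unfold plus; simpl. assert (a (S N) <= b (S N)) by (apply H; lia).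
  assert (sum_n a N <= sum_n b N) by (apply IHN; intros; apply H; lia). lra.
Qed.

Lemma sum_n_tail (c w : nat -> R) B K M : (forall k, c k <= B * w k) -> (K <= M)%nat ->
  sum_n c M - sum_n c K <= B * (sum_n w M - sum_n w K).
Proof.
  intros H HKM. induction HKM. lra.
  rewrite !sum_Sn; unfold plus; simpl. specialize (H (S m)). lra.
Qed.

Lemma at_right_forall_upto (r : nat -> R -> R) L K eta : 0 < eta ->
  (forall k, filterlim (r k) (at_right 0) (locally L)) ->
  at_right 0 (fun s => forall k, (k <= K)%nat -> Rabs (r k s - L) < eta).
Proof.
  intros He Hr. induction K.
  - specialize (Hr 0%nat). apply filterlim_locally with (eps := mkposreal eta He) in Hr.
    eapply filter_imp; [|exact Hr]. intros s Hs k Hk. assert (k = 0%nat) by lia. subst.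
    exact Hs.
  - specialize (Hr (S K)). apply filterlim_locally with (eps := mkposreal eta He) in Hr.
    eapply filter_imp; [|exact (filter_and _ _ IHK Hr)]. intros s [H1 H2] k Hk.
    destruct (Nat.eq_dec k (S K)). subst. exact H2. apply H1; lia.
Qed.

Lemma tannery (w : nat -> R) (r : nat -> R -> R) (L B : R) :
  (forall k, 0 <= w k) -> ex_series w -> (forall k s, 0 < s -> Rabs (r k s) <= B) ->
  (forall k, filterlim (r k) (at_right 0) (locally L)) ->
  filterlim (fun s => Series (fun k => w k * r k s)) (at_right 0) (locally (Series w * L)).
Proof.
  intros Hw Hex Hb Hr. apply filterlim_locally. intros eps.
  pose proof (cond_pos eps) as He.
  set (B' := B + Rabs L). set (SW := Series w).
  assert (HSW : 0 <= SW) by (apply series_nonneg; auto).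
  assert (HB0 : 0 <= B).
  { specialize (Hb 0%nat 1 ltac:(lra)). pose proof (Rabs_pos (r 0%nat 1)). lra. }
  assert (HB' : 0 <= B') by (unfold B'; pose proof (Rabs_pos L); lra).
  set (e1 := eps / (4 * (B' + 1))).
  assert (He1 : 0 < e1) by (unfold e1; apply Rdiv_lt_0_compat; lra).
  assert (Hlim : is_lim_seq (sum_n w) SW) by exact (Series_correct _ Hex).
  apply is_lim_seq_spec in Hlim. destruct (Hlim (mkposreal e1 He1)) as [K HK]. simpl in HK.
  specialize (HK K (Nat.le_refl K)).
  set (eta := eps / (4 * (SW + 1))).
  assert (Heta : 0 < eta) by (unfold eta; apply Rdiv_lt_0_compat; lra).
  pose proof (at_right_forall_upto r L K eta Heta Hr) as HF.
  assert (Hpos : at_right 0 (fun s => 0 < s)).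
  { exists (mkposreal 1 ltac:(lra)). intros y _ Hy; auto. }
  eapply filter_imp; [|exact (filter_and _ _ HF Hpos)]. intros s [Hs Hs0].
  set (a := fun k => w k * (r k s - L)).
  assert (Ha : forall k, Rabs (a k) <= B' * w k).
  { intros k. unfold a. rewrite Rabs_mult, Rabs_pos_eq by auto.
    assert (Rabs (r k s - L) <= B').
    { unfold B'. eapply Rle_trans. apply Rabs_triang. rewrite Rabs_Ropp. specialize (Hb k s Hs0). lra. }
    specialize (Hw k). nra. }
  assert (Exa : ex_series (fun k => Rabs (a k))).
  { apply (ex_series_le_R _ (fun k => B' * w k)). intros k; split; [apply Rabs_pos|apply Ha].
    apply ex_series_scal_R; auto. }
  assert (Exr : ex_series (fun k => w k * r k s)).
  { apply (@ex_series_le R_AbsRing R_CompleteNormedModule _ (fun k => w k * B)). intros k. change (norm (w k * r k s)) with (Rabs (w k * r k s)).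
    rewrite Rabs_mult, Rabs_pos_eq by auto. specialize (Hb k s Hs0). specialize (Hw k). nra.
    eapply ex_series_ext; [|apply (ex_series_scal_R B w Hex)]. intros; simpl; ring. }
  assert (Eq : Series (fun k => w k * r k s) - SW * L = Series a).
  { unfold SW. rewrite <- Series_scal_r. unfold a.
    rewrite <- Series_minus; auto. apply Series_ext; intros; ring.
    eapply ex_series_ext; [|apply (ex_series_scal_R L w Hex)]. intros; simpl; ring. }
  assert (Hpart : forall N, sum_n (fun k => Rabs (a k)) N <= eta * SW + B' * e1).
  { intros N.
    assert (P1 : sum_n (fun k => Rabs (a k)) K <= eta * SW).
    { apply Rle_trans with (sum_n (fun k => eta * w k) K).
      apply sum_n_le_upto. intros k Hk. unfold a. rewrite Rabs_mult, Rabs_pos_eq by auto.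
      specialize (Hs k Hk). specialize (Hw k). rewrite Rmult_comm. apply Rmult_le_compat_r; auto; lra.
      assert (sum_n (fun k => eta * w k) K = eta * sum_n w K) by (apply (sum_n_mult_l eta w K)).
      rewrite H. apply Rmult_le_compat_l; [lra|]. apply partial_le_series; auto. }
    assert (P2 : forall M, (K <= M)%nat -> sum_n (fun k => Rabs (a k)) M <= eta * SW + B' * e1).
    { intros M HM. pose proof (sum_n_tail (fun k => Rabs (a k)) w B' K M Ha HM).
      assert (sum_n w M <= SW) by (apply partial_le_series; auto).
      apply Rabs_lt_between in HK. assert (B' * (sum_n w M - sum_n w K) <= B' * e1).
      { apply Rmult_le_compat_l; auto. lra. }
      lra. }
    destruct (Compare_dec.le_lt_dec K N) as [HKN|HKN]. apply P2; auto.
    apply Rle_trans with (sum_n (fun k => Rabs (a k)) K); [|pose proof (Rmult_le_pos B' e1 HB' (Rlt_le _ _ He1)); lra].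
    apply sum_n_mono_N. intros; apply Rabs_pos. lia. }
  destruct (nonneg_bounded _ _ (fun k => Rabs_pos (a k)) Hpart) as [_ HS].
  pose proof (Series_Rabs a Exa).
  unfold ball; simpl; unfold AbsRing_ball, abs, minus, plus, opp; simpl.
  change (Series (fun k => w k * r k s) + - (SW * L)) with (Series (fun k => w k * r k s) - SW * L).
  rewrite Eq.
  assert (eta * SW <= eps / 4).
  { unfold eta. apply (Rmult_le_reg_r (4 * (SW + 1))). lra.
    replace (eps / (4 * (SW + 1)) * SW * (4 * (SW + 1))) with (eps * SW) by (field; lra).
    replace (eps / 4 * (4 * (SW + 1))) with (eps * (SW + 1)) by field. nra. }
  assert (B' * e1 <= eps / 4).
  { unfold e1. apply (Rmult_le_reg_r (4 * (B' + 1))). lra.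
    replace (B' * (eps / (4 * (B' + 1))) * (4 * (B' + 1))) with (eps * B') by (field; lra).
    replace (eps / 4 * (4 * (B' + 1))) with (eps * (B' + 1)) by field. nra. }
  lra.
Qed.


Definition hk (p k : nat) (s : R) : R := Rpower (INR (S k) * s) (/ INR p).

Lemma hk_pos p k s : 0 < hk p k s.
Proof. unfold hk, Rpower; apply exp_pos. Qed.

Lemma T_eq p m s : (1 <= p)%nat -> 0 < s ->
  Rpower s (xg p m) * Dn p m (- s) = Series (fun k => wz p k * Rh p m (hk p k s)).
Proof.
  intros Hp Hs.
  set (u := fun j k => aj p j ^ m * tphi m (aj p j * - s) k).
  assert (Hneg : forall j, aj p j * - s < 0) by (intros j; pose proof (aj_pos p j Hp); nra).
  assert (Hu0 : forall j k, 0 <= u j k).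
  { intros j k. unfold u. apply Rmult_le_pos. pose proof (aj_pos p j Hp). apply pow_le; lra. apply tphi_nonneg. }
  assert (Huj : forall j, ex_series (u j)).
  { intros j. unfold u. apply ex_series_scal_R. apply ex_phi; auto. }
  assert (HD : Dn p m (- s) = Series (fun j => Series (u j))).
  { unfold Dn. apply Series_ext. intros j. unfold tD, u, phi. rewrite Series_scal_l. auto. }
  assert (HuS : ex_series (fun j => Series (u j))).
  { eapply ex_series_ext; [|apply (ex_D p m (- s) Hp ltac:(lra))]. intros j. unfold tD, u, phi. rewrite Series_scal_l. auto. }
  destruct (fubini u Hu0 Huj HuS) as [_ Hf].
  rewrite HD, <- Hf, <- Series_scal_l. apply Series_ext. intros k.
  pose proof (INRS_pos k) as Hk. pose proof INRp_pos as Hp0.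
  set (h := hk p k s). set (U := INR (S k) * s).
  assert (Hh : 0 < h) by apply hk_pos.
  assert (HU : 0 < U) by (unfold U; nra).
  assert (HhU : h ^ p = U) by (unfold h, hk; apply rpow_root; auto).
  set (c := INR (S k) ^ m / INR (S k) / (h * U ^ m)).
  assert (HUm : 0 < U ^ m) by (apply pow_lt; auto).
  assert (Hterm : forall j, u j k = c * term (gf p m) h j).
  { intros j. unfold u, term, gf, tphi, c.
    rewrite Rpow_mult_distr, HhU. change (INR (S j) ^ p) with (aj p j).
    replace (INR (S k) * (aj p j * - s)) with (- (aj p j * U)) by (unfold U; ring).
    rewrite Rpow_mult_distr. field. split; lra. }
  rewrite (Series_ext _ _ Hterm), Series_scal_l. fold (Rh p m h).
  rewrite <- Rmult_assoc. f_equal.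
  unfold c, wz, xg, h, hk, U.
  rewrite <- Rpower_mult_distr by lra.
  rewrite Rpower_plus, Rpower_plus, Rpower_pow, Rpower_1 by lra.
  rewrite Rpow_mult_distr.
  assert (0 < Rpower (INR (S k)) (/ INR p)) by apply rpow_pos.
  assert (0 < Rpower s (/ INR p)) by apply rpow_pos.
  assert (0 < s ^ m) by (apply pow_lt; auto).
  assert (0 < INR (S k) ^ m) by (apply pow_lt; auto).
  field. repeat split; lra.
Qed.

Lemma Rh_lim p m k : (1 <= p)%nat ->
  filterlim (fun s => Rh p m (hk p k s)) (at_right 0) (locally (I0 p m)).
Proof.
  intros Hp. apply filterlim_locally. intros eps. pose proof (cond_pos eps) as He.
  pose proof (Kc_nonneg m) as HK. pose proof (INRS_pos k) as Hk.
  set (del := eps / (2 * (Kc m + 1))).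
  assert (Hdel : 0 < del) by (unfold del; apply Rdiv_lt_0_compat; lra).
  assert (Hdp : 0 < del ^ p / INR (S k)) by (apply Rdiv_lt_0_compat; [apply pow_lt|]; lra).
  exists (mkposreal _ Hdp). intros s Hs Hs0.
  change (Rabs (s + - 0) < del ^ p / INR (S k)) in Hs.
  apply Rabs_lt_between in Hs. destruct Hs as [_ Hs]. rewrite Ropp_0, Rplus_0_r in Hs.
  set (h := hk p k s). assert (Hh : 0 < h) by apply hk_pos.
  destruct (Rh_spec p m Hp h Hh) as [_ Hb].
  assert (Hhd : h < del).
  { apply Rnot_le_lt. intros Hc. assert (del ^ p <= h ^ p) by (apply pow_incr; lra).
    unfold h, hk in H. rewrite rpow_root in H by (auto; nra).
    assert (INR (S k) * s < del ^ p).
    { apply (Rmult_lt_compat_l (INR (S k))) in Hs; [|lra]. 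
      replace (INR (S k) * (del ^ p / INR (S k))) with (del ^ p) in Hs by (field; lra). lra. }
    lra. }
  unfold ball; simpl; unfold AbsRing_ball, abs, minus, plus, opp; simpl.
  change (Rh p m h + - I0 p m) with (Rh p m h - I0 p m).
  eapply Rle_lt_trans. exact Hb.
  assert (2 * h * Kc m <= 2 * del * Kc m) by nra.
  assert (2 * del * Kc m < eps).
  { unfold del. apply (Rmult_lt_reg_r (Kc m + 1)). lra.
    replace (2 * (eps / (2 * (Kc m + 1))) * Kc m * (Kc m + 1)) with (eps * Kc m) by (field; lra). nra. }
  lra.
Qed.

Theorem proposition4p2 (p m : nat) (hp : (1 <= p)%nat) :
  filterlim
    (fun s : R =>
       Derive_n (Fp p) m (- s) /
       (/ INR p * zeta (1 + / INR p) * Gamma (INR m + / INR p)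
          * / Rpower s (INR m + / INR p)))
    (at_right 0) (locally 1).
Proof.
  set (Z := Series (wz p)).
  assert (HZ : 0 < Z).
  { apply Rlt_le_trans with (wz p 0). apply wz_pos. apply term_le_series.
    intros; left; apply wz_pos. apply ex_wz; auto. }
  pose proof (I0_pos p m hp) as HI.
  pose proof (INRp_pos p hp) as Hp0.
  set (T := fun s => Series (fun k => wz p k * Rh p m (hk p k s))).
  assert (HT : filterlim T (at_right 0) (locally (Z * I0 p m))).
  { apply (tannery (wz p) (fun k s => Rh p m (hk p k s)) (I0 p m) (Bd p m)).
    intros; left; apply wz_pos. apply ex_wz; auto.
    intros k s Hs. destruct (Rh_bound p m hp (hk p k s) (hk_pos p k s)). rewrite Rabs_pos_eq; lra.
    intros k. apply Rh_lim; auto. }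
  assert (Hc : filterlim (fun x => x / (Z * I0 p m)) (locally (Z * I0 p m)) (locally 1)).
  { assert (Hc0 : continuous (fun x => x / (Z * I0 p m)) (Z * I0 p m)).
    { apply (@ex_derive_continuous R_AbsRing R_NormedModule). auto_derive. nra. }
    assert (E : Z * I0 p m / (Z * I0 p m) = 1) by (field; nra).
    unfold continuous in Hc0. rewrite E in Hc0. exact Hc0. }
  pose proof (filterlim_comp _ _ _ T (fun x => x / (Z * I0 p m)) _ _ _ HT Hc) as HL.
  eapply filterlim_ext_loc; [|exact HL].
  exists (mkposreal 1 ltac:(lra)). intros s _ Hs. simpl.
  unfold T. rewrite <- T_eq by auto.
  rewrite Derive_n_Fp by (auto; lra).
  change (zeta (1 + / INR p)) with Z.
  change (INR m + / INR p) with (xg p m).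
  rewrite Gamma_val by auto.
  assert (0 < Rpower s (xg p m)) by apply rpow_pos.
  field. repeat split; lra.
Qed.
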